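(* Let $\alpha:U\to V$ be a surjective h-transmission between commutative supertropical monoids, and assume that $U$ is a semiring. Then $V$ is a semiring.
   Context: All monoids are commutative. A supertropical monoid is a monoid $(U,\cdot)$ with absorbing element $0$ and distinguished idempotent $e$ with $ex=0\Rightarrow x=0$, together with a total ordering on $eU$, compatible with multiplication and with $0$ least, making $eU$ a bipotent semiring (addition $=\max$). Define $x+y:=y$ if $ex<ey$, $x$ if $ex>ey$, $ex$ if $ex=ey$; $U$ is a semiring if this addition is associative and distributive. A transmission $\alpha:U\to V$ is a map with $\alpha(0)=0$, $\alpha(1)=1$, multiplicative, $\alpha(e_U)=e_V$, order-preserving on $eU$. An h-transmission is a transmission such that for all $x,y\in U$: if $ex<ey$ and $\alpha(ex)=\alpha(ey)$, then $\alpha(y)\in eV$. *)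

(* Defs.v *)
From Stdlib Require Import ClassicalEpsilon.

Set Implicit Arguments.

Record stmonoid := STMonoid {
  carrier :> Type;
  mul : carrier -> carrier -> carrier;
  one : carrier;
  zero : carrier;
  ee : carrier;
  le : carrier -> carrier -> Prop;
  mulA : forall x y z, mul x (mul y z) = mul (mul x y) z;
  mulC : forall x y, mul x y = mul y x;
  mul1 : forall x, mul one x = x;
  mul0 : forall x, mul zero x = zero;
  ee_idem : mul ee ee = ee;
  ee_faithful : forall x, mul ee x = zero -> x = zero;
  le_refl : forall a, (exists u, a = mul ee u) -> le a a;
  le_trans : forall a b c, (exists u, a = mul ee u) -> (exists u, b = mul ee u) ->
     (exists u, c = mul ee u) -> le a b -> le b c -> le a c;
  le_antisym : forall a b, (exists u, a = mul ee u) -> (exists u, b = mul ee u) ->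
     le a b -> le b a -> a = b;
  le_total : forall a b, (exists u, a = mul ee u) -> (exists u, b = mul ee u) ->
     le a b \/ le b a;
  le_mul : forall a b c, (exists u, a = mul ee u) -> (exists u, b = mul ee u) ->
     (exists u, c = mul ee u) -> le a b -> le (mul a c) (mul b c);
  le0 : forall a, (exists u, a = mul ee u) -> le zero a
}.

Arguments mul {s} _ _.
Arguments le {s} _ _.


Section Ops.
Variable U : stmonoid.

Definition in_eU (x : U) : Prop := exists u, x = mul (ee U) u.

Definition lt (a b : U) : Prop := le a b /\ a <> b.

Definition add (x y : U) : U :=
  if excluded_middle_informative (lt (mul (ee U) x) (mul (ee U) y)) then y
  else if excluded_middle_informative (lt (mul (ee U) y) (mul (ee U) x)) then x
  else mul (ee U) x.

Definition is_semiring : Prop :=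
  (forall x y z : U, add x (add y z) = add (add x y) z) /\
  (forall x y z : U, mul x (add y z) = add (mul x y) (mul x z)).
End Ops.
Arguments in_eU {U} _.
Arguments lt {U} _ _.
Arguments add {U} _ _.

Definition is_transmission (U V : stmonoid) (f : U -> V) : Prop :=
  f (zero U) = zero V /\ f (one U) = one V /\
  (forall x y, f (mul x y) = mul (f x) (f y)) /\
  f (ee U) = ee V /\
  (forall a b : U, in_eU a -> in_eU b -> le a b -> le (f a) (f b)).

Definition is_h_transmission (U V : stmonoid) (f : U -> V) : Prop :=
  is_transmission U V f /\
  (forall x y : U, lt (mul (ee U) x) (mul (ee U) y) ->
     f (mul (ee U) x) = f (mul (ee U) y) -> in_eU (f y)).

(* Main.v *)
Require Import Defs.
From Stdlib Require Import ClassicalEpsilon Classical.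

Lemma add_lt (W : stmonoid) (x y : W) :
  lt (mul (ee W) x) (mul (ee W) y) -> add x y = y.
Proof.
  intro H. unfold add. destruct (excluded_middle_informative _); [reflexivity|contradiction].
Qed.

Lemma add_gt (W : stmonoid) (x y : W) :
  lt (mul (ee W) y) (mul (ee W) x) -> add x y = x.
Proof.
  intro H. unfold add. destruct (excluded_middle_informative _) as [H1|H1].
  - exfalso. destruct H, H1. apply H0. apply le_antisym; auto.
    exists y; reflexivity. exists x; reflexivity.
  - destruct (excluded_middle_informative _); [reflexivity|contradiction].
Qed.

Lemma add_eq (W : stmonoid) (x y : W) :
  mul (ee W) x = mul (ee W) y -> add x y = mul (ee W) x.
Proof.
  intro H. unfold add. rewrite H.
  destruct (excluded_middle_informative _) as [H1|H1].
  - destruct H1; congruence.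
  - destruct (excluded_middle_informative (lt (mul (ee W) y) (mul (ee W) y))) as [H2|H2]; [destruct H2; congruence|reflexivity].
Qed.

Lemma hom_add (U V : stmonoid) (f : U -> V) :
  is_h_transmission U V f -> forall x y, f (add x y) = add (f x) (f y).
Proof.
  intros [[H0 [H1 [Hm [He Hle]]]] Hh] x y.
  assert (Ex : f (mul (ee U) x) = mul (ee V) (f x)) by (rewrite Hm, He; reflexivity).
  assert (Ey : f (mul (ee U) y) = mul (ee V) (f y)) by (rewrite Hm, He; reflexivity).
  assert (ix : in_eU (mul (ee U) x)) by (exists x; reflexivity).
  assert (iy : in_eU (mul (ee U) y)) by (exists y; reflexivity).
  assert (idem : forall v : V, in_eU v -> mul (ee V) v = v).
  { intros v [w ->]. rewrite mulA, ee_idem. reflexivity. }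
  destruct (excluded_middle_informative (lt (mul (ee U) x) (mul (ee U) y))) as [Lxy|Lxy].
  - rewrite add_lt by exact Lxy.
    destruct (excluded_middle_informative (f (mul (ee U) x) = f (mul (ee U) y))) as [Q|Q].
    + rewrite add_eq by congruence.
      rewrite <- Ex, Q, Ey. symmetry; apply idem. exact (Hh x y Lxy Q).
    + rewrite add_lt; [reflexivity|]. rewrite <- Ex, <- Ey. split; auto.
      apply Hle; auto. apply Lxy.
  - destruct (excluded_middle_informative (lt (mul (ee U) y) (mul (ee U) x))) as [Lyx|Lyx].
    + rewrite add_gt by exact Lyx.
      destruct (excluded_middle_informative (f (mul (ee U) y) = f (mul (ee U) x))) as [Q|Q].
      * rewrite add_eq by congruence.
        symmetry; apply idem. exact (Hh y x Lyx Q).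
      * rewrite add_gt; [reflexivity|]. rewrite <- Ex, <- Ey. split; auto.
        apply Hle; auto. apply Lyx.
    + assert (E : mul (ee U) x = mul (ee U) y).
      { destruct (@le_total U _ _ ix iy) as [L|L].
        - destruct (classic (mul (ee U) x = mul (ee U) y)) as [e|n]; auto.
          exfalso; apply Lxy; split; auto.
        - destruct (classic (mul (ee U) y = mul (ee U) x)) as [e|n]; auto.
          exfalso; apply Lyx; split; auto. }
      rewrite add_eq by exact E. rewrite add_eq; [exact Ex|]. rewrite <- Ex, <- Ey, E. reflexivity.
Qed.

Theorem theorem5p7 (U V : stmonoid) (alpha : U -> V) :
  is_h_transmission U V alpha ->
  (forall v : V, exists u : U, alpha u = v) ->
  is_semiring U ->
  is_semiring V.
Proof.
  intros Hh Hs [HA HD].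
  pose proof (@hom_add U V alpha Hh) as Ha.
  destruct Hh as [[_ [_ [Hm _]]] _].
  split; intros x y z;
  destruct (Hs x) as [a <-]; destruct (Hs y) as [b <-]; destruct (Hs z) as [c <-].
  - rewrite <- !Ha, HA. reflexivity.
  - rewrite <- Ha, <- !Hm, <- Ha, HD. reflexivity.
Qed.
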